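(* (i) The symmetric bilinear form $(\cdot,\cdot)_i$ on $\bar{\mathcal V}_i$ is positive definite. (ii) The symmetric bilinear form $(\cdot,\cdot)_i$ on ${\mathcal V}_i$ is positive semidefinite.
   Context: Let ${\mathcal G}$ be a complex Lie algebra, ${\mathcal H}$ a subalgebra and $(\cdot,\cdot)$ a bilinear form on ${\mathcal G}$ such that: the form is symmetric, nondegenerate and invariant; ${\mathcal H}$ is a nontrivial finite dimensional abelian self-centralizing subalgebra with $\mathrm{ad}(h)$ diagonalizable for all $h\in{\mathcal H}$; for every root $\alpha$ with $(\alpha,\alpha)\neq 0$ and $x\in{\mathcal G}_\alpha$, $\mathrm{ad}(x)$ acts locally nilpotently on ${\mathcal G}$; the root system $R=\{\alpha\in{\mathcal H}^\star\mid {\mathcal G}_\alpha\neq 0\}$ is discrete in ${\mathcal H}^\star$; and $R^\times=\{\alpha\in R\mid(\alpha,\alpha)\neq0\}\neq\emptyset$ (i.e. ${\mathcal G}$ is a generalized reductive Lie algebra). Here the form is transferred to ${\mathcal H}^\star$ via $(\alpha,\beta):=(t_\alpha,t_\beta)$, where $t_\alpha\in{\mathcal H}$ represents $\alpha$ via the form. Let ${\mathcal V}$ be the real span of $R$. Partition $R^\times=\bigcup_i R^\times_i$ into the equivalence classes of the relation: $\alpha\sim\beta$ iff there is a chain $\alpha=\alpha_0,\alpha_1,\dots,\alpha_t=\beta$ in $R^\times$ with $(\alpha_j,\alpha_{j+1})\neq0$; so each $R^\times_i$ is indecomposable and $(R^\times_i,R^\times_j)=0$ for $i\neq j$. Let ${\mathcal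 V}_i$ be the real span of $R^\times_i$. Fix a nonzero scalar $c_i\in\mathbb C$ such that $(\cdot,\cdot)_i:=c_i(\cdot,\cdot)$ is real valued on ${\mathcal V}_i$ and $(\alpha,\alpha)_i>0$ for all $\alpha\in R^\times_i$. Let ${\mathcal V}^0=\{v\in{\mathcal V}\mid (v,{\mathcal V})=0\}$ be the radical of $(\cdot,\cdot)$ on ${\mathcal V}$, $\bar{\mathcal V}={\mathcal V}/{\mathcal V}^0$ with canonical map $v\mapsto\bar v$, equipped with the induced form $(\bar\alpha,\bar\beta):=(\alpha,\beta)$; let $\bar{\mathcal V}_i$ be the image of ${\mathcal V}_i$, with form $(\cdot,\cdot)_i=c_i(\cdot,\cdot)$. It has been shown that $\bar R_i=\{\bar\alpha\mid\alpha\in R^\times_i\}\cup\{0\}$ is finite. *)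

(* Defs.v *)
From mathcomp Require Import all_boot all_order all_algebra.
From mathcomp Require Import reals.
From mathcomp.real_closed Require Import complex.
From Stdlib Require Import ClassicalEpsilon.

Set Implicit Arguments.
Unset Strict Implicit.
Unset Printing Implicit Defensive.
Import GRing.Theory Num.Theory.
Local Open Scope ring_scope.

Section GenReductive.

Variable R : realType.
Local Notation C := (R[i]).
Variable G : lmodType C.
Variable br : G -> G -> G.
Variable B : G -> G -> C.
Variable H : vectType C.
Variable emb : {linear H -> G}.

Definition lie_bracket : Prop :=
  [/\ (forall (a : C) x y z, br (a *: x + y) z = a *: br x z + br y z),
      (forall (a : C) x y z, br z (a *: x + y) = a *: br z x + br z y),
      (forall x, br x x = 0) &
      (forall x y z, br x (br y z) + br y (br z x) + br z (br x y) = 0)].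

Definition good_form : Prop :=
  [/\ (forall (a : C) x y z, B (a *: x + y) z = a * B x z + B y z),
      (forall x y, B x y = B y x),
      (forall x, (forall y, B x y = 0) -> x = 0) &
      (forall x y z, B (br x y) z = B x (br y z))].

Definition good_cartan : Prop :=
  [/\ injective emb,
      (exists h : H, h != 0),
      (forall h k : H, br (emb h) (emb k) = 0) &
      (forall x : G, (forall h : H, br (emb h) x = 0) -> exists h : H, x = emb h)].

Definition ad_diagonalizable : Prop :=
  forall (h : H) (x : G), exists n (lam : 'I_n -> C) (v : 'I_n -> G),
    (forall k, br (emb h) (v k) = lam k *: v k) /\ x = \sum_(k < n) v k.

(* root spaces and roots; H^* is represented by functions H -> C *)
Definition root_space (al : H -> C) (x : G) : Prop :=
  forall h : H, br (emb h) x = al h *: x.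

Definition is_root (al : H -> C) : Prop := exists x : G, x != 0 /\ root_space al x.

Definition tvec (al : H -> C) : H :=
  epsilon (inhabits (0 : H)) (fun t : H => forall h : H, B (emb t) (emb h) = al h).

Definition hform (al be : H -> C) : C := B (emb (tvec al)) (emb (tvec be)).

Definition Rx (al : H -> C) : Prop := is_root al /\ hform al al != 0.

Definition loc_nilpotent : Prop :=
  forall al, Rx al -> forall x, root_space al x ->
    forall y : G, exists n : nat, iter n (br x) y = 0.

(* R is discrete in H^*: each root is isolated; the topology of the finite
   dimensional space H^* is described by the coordinates al(b_j) on a basis b of H *)
Definition roots_discrete : Prop :=
  forall al, is_root al -> exists e : C, 0 < e /\
    forall be, is_root be ->
      (forall j : 'I_(\dim (fullv : {vspace H})),
         `| be (tnth (vbasis fullv) j) - al (tnth (vbasis fullv) j) | < e) ->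
      be = al.

Definition gen_reductive : Prop :=
  [/\ lie_bracket, good_form, good_cartan, ad_diagonalizable &
      [/\ loc_nilpotent, roots_discrete & exists al, Rx al]].

Inductive rchain : (H -> C) -> (H -> C) -> Prop :=
  | rchain_refl al : Rx al -> rchain al al
  | rchain_step al be ga : Rx al -> hform al be != 0 -> rchain be ga -> rchain al ga.

Definition real_span (S : (H -> C) -> Prop) (v : H -> C) : Prop :=
  exists n (r : 'I_n -> C) (a : 'I_n -> H -> C),
    (forall k, r k \is Num.real /\ S (a k)) /\
    forall h : H, v h = \sum_(k < n) r k * a k h.

Definition Vsp : (H -> C) -> Prop := real_span is_root.

Definition Vrad (v : H -> C) : Prop := Vsp v /\ forall w, Vsp w -> hform v w = 0.

End GenReductive.

(* Main.v *)
Require Import Defs.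
From mathcomp Require Import all_boot all_order all_algebra.
From mathcomp Require Import reals boolp.
From mathcomp Require Import ring zify.
From mathcomp.real_closed Require Import complex.
From Stdlib Require Import ClassicalEpsilon.
Import Order.TTheory GRing.Theory Num.Theory.
Local Open Scope ring_scope.
Set Implicit Arguments.
Unset Strict Implicit.
Unset Printing Implicit Defensive.
Section Main.
Variable R : realType.
Local Notation C := (R[i]).
Variables (G : lmodType C) (br : G -> G -> G) (B : G -> G -> C)
  (H : vectType C) (emb : {linear H -> G}).
Hypothesis hG : gen_reductive br B emb.

Lemma hLie : lie_bracket br. Proof. by case: hG. Qed.
Lemma hForm : good_form br B. Proof. by case: hG. Qed.
Lemma hCart : good_cartan br emb. Proof. by case: hG. Qed.
Lemma hDiag : ad_diagonalizable br emb. Proof. by case: hG. Qed.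
Lemma hNil al : Rx br B emb al -> forall x, root_space br emb al x -> forall y : G, exists n : nat, iter n (br x) y = 0.
Proof. by case: hG => _ _ _ _ [] L _ _; apply: L. Qed.

Lemma brDl x y z : br (x + y) z = br x z + br y z.
Proof. by case: hLie => L _ _ _; rewrite -[x in LHS]scale1r L scale1r. Qed.
Lemma br0l z : br 0 z = 0.
Proof. have h := brDl 0 0 z; rewrite addr0 in h. by apply: (addrI (br 0 z)); rewrite addr0 -h. Qed.
Lemma brZl a x z : br (a *: x) z = a *: br x z.
Proof. by case: hLie => L _ _ _; rewrite -[a *: x]addr0 L br0l addr0. Qed.
Lemma brDr x y z : br z (x + y) = br z x + br z y.
Proof. by case: hLie => _ L _ _; rewrite -[x in LHS]scale1r L scale1r. Qed.
Lemma br0r z : br z 0 = 0.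
Proof. have h := brDr 0 0 z; rewrite addr0 in h. by apply: (addrI (br z 0)); rewrite addr0 -h. Qed.
Lemma brZr a x z : br z (a *: x) = a *: br z x.
Proof. by case: hLie => _ L _ _; rewrite -[a *: x]addr0 L br0r addr0. Qed.
Lemma brNl x z : br (- x) z = - br x z.
Proof. by rewrite -scaleN1r brZl scaleN1r. Qed.
Lemma brNr x z : br z (- x) = - br z x.
Proof. by rewrite -scaleN1r brZr scaleN1r. Qed.
Lemma brBl x y z : br (x - y) z = br x z - br y z.
Proof. by rewrite brDl brNl. Qed.
Lemma brBr x y z : br z (x - y) = br z x - br z y.
Proof. by rewrite brDr brNr. Qed.
Lemma brxx x : br x x = 0. Proof. by case: hLie. Qed.
Lemma brC x y : br x y = - br y x.
Proof.
have := brxx (x + y); rewrite brDl !brDr !brxx add0r addr0 => /eqP.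
by rewrite addr_eq0 => /eqP.
Qed.
Lemma brJ x y z : br x (br y z) = br (br x y) z + br y (br x z).
Proof.
case: hLie => _ _ _ J; have := J x y z.
rewrite [br z (br x y)]brC [br z x]brC brNr => /eqP.
rewrite -addrA -opprD subr_eq0 => /eqP ->; by rewrite addrC.
Qed.
Lemma brsumr I (r : seq I) (P : pred I) (F : I -> G) z :
  br z (\sum_(i <- r | P i) F i) = \sum_(i <- r | P i) br z (F i).
Proof. by elim/big_rec2: _ => [|i a b _ <-]; rewrite ?br0r ?brDr. Qed.
Lemma brsuml I (r : seq I) (P : pred I) (F : I -> G) z :
  br (\sum_(i <- r | P i) F i) z = \sum_(i <- r | P i) br (F i) z.
Proof. by elim/big_rec2: _ => [|i a b _ <-]; rewrite ?br0l ?brDl. Qed.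

Lemma BDl x y z : B (x + y) z = B x z + B y z.
Proof. by case: hForm => L _ _ _; rewrite -[x in LHS]scale1r L mul1r. Qed.
Lemma B0l z : B 0 z = 0.
Proof. have h := BDl 0 0 z; rewrite addr0 in h. by apply: (addrI (B 0 z)); rewrite addr0 -h. Qed.
Lemma BZl a x z : B (a *: x) z = a * B x z.
Proof. by case: hForm => L _ _ _; rewrite -[a *: x]addr0 L B0l addr0. Qed.
Lemma BC x y : B x y = B y x. Proof. by case: hForm. Qed.
Lemma BDr x y z : B z (x + y) = B z x + B z y.
Proof. by rewrite BC BDl !(BC z). Qed.
Lemma BZr a x z : B z (a *: x) = a * B z x.
Proof. by rewrite BC BZl BC. Qed.
Lemma B0r z : B z 0 = 0. Proof. by rewrite BC B0l. Qed.
Lemma BNr x z : B z (- x) = - B z x.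
Proof. by rewrite -scaleN1r BZr mulN1r. Qed.
Lemma Binv x y z : B (br x y) z = B x (br y z). Proof. by case: hForm. Qed.
Lemma Bsumr I (r : seq I) (P : pred I) (F : I -> G) z :
  B z (\sum_(i <- r | P i) F i) = \sum_(i <- r | P i) B z (F i).
Proof. by elim/big_rec2: _ => [|i a b _ <-]; rewrite ?B0r ?BDr. Qed.
Lemma Bnondeg x : (forall y, B x y = 0) -> x = 0. Proof. by case: hForm => _ _ Hn _; apply: Hn. Qed.

Lemma emb_inj : injective emb. Proof. by case: hCart. Qed.
Lemma brHH h k : br (emb h) (emb k) = 0. Proof. by case: hCart. Qed.
Lemma selfcent x : (forall h, br (emb h) x = 0) -> exists h, x = emb h.
Proof. by case: hCart => _ _ _ Hs; apply: Hs. Qed.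


Definition lin (al : H -> C) := forall a h k, al (a *: h + k) = a * al h + al k.

Lemma lin0 al : lin al -> al 0 = 0.
Proof.
move=> L; have := L 1 0 0; rewrite scale1r addr0 mul1r => h.
by apply: (addrI (al 0)); rewrite addr0 -h.
Qed.
Lemma linD al : lin al -> forall h k, al (h + k) = al h + al k.
Proof. by move=> L h k; rewrite -[h in LHS]scale1r L mul1r. Qed.
Lemma linZ al : lin al -> forall a h, al (a *: h) = a * al h.
Proof. by move=> L a h; rewrite -[a *: h]addr0 L lin0 // addr0. Qed.
Lemma linN al : lin al -> forall h, al (- h) = - al h.
Proof. by move=> L h; rewrite -scaleN1r linZ // mulN1r. Qed.
Lemma lin_sum al : lin al -> forall I (r : seq I) (P : pred I) (F : I -> H),
  al (\sum_(i <- r | P i) F i) = \sum_(i <- r | P i) al (F i).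
Proof. by move=> L I r P F; elim/big_rec2: _ => [|i a b _ <-]; rewrite ?lin0 ?linD. Qed.

Lemma root_lin al : is_root br emb al -> lin al.
Proof.
case=> x [nx rx] a h k.
have e1 := rx (a *: h + k).
have : br (emb (a *: h + k)) x = (a * al h + al k) *: x.
  by rewrite linearP /= brDl brZl !rx scalerA scalerDl.
rewrite e1 => /eqP; rewrite -subr_eq0 -scalerBl scaler_eq0 (negPf nx) orbF subr_eq0.
by move/eqP.
Qed.

Lemma emb_scale (a : C) h : emb (a *: h) = a *: emb h.
Proof. by rewrite -[a *: h]addr0 linearP /= raddf0 addr0. Qed.

Lemma emb_add x y : emb (x + y) = emb x + emb y.
Proof. by rewrite -[x in LHS]scale1r linearP /= scale1r. Qed.
Lemma emb0 : emb 0 = 0.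
Proof. have h := emb_add 0 0; rewrite addr0 in h. by apply: (addrI (emb 0)); rewrite addr0 -h. Qed.
Lemma emb_sum I (r : seq I) (F : I -> H) :
  emb (\sum_(i <- r) F i) = \sum_(i <- r) emb (F i).
Proof. by elim/big_rec2: _ => [|i a b _ <-]; rewrite ?emb0 ?emb_add. Qed.

Definition bas := vbasis (fullv : {vspace H}).
Lemma basis_expand (h : H) :
  h = \sum_(i < \dim (fullv : {vspace H})) (coord bas i h : C) *: (bas`_i : H).
Proof. exact: coord_vbasis (memvf h). Qed.

Definition eig h (lam : C) x := br (emb h) x = lam *: x.

Lemma eig_comm b h c x : eig b c x -> eig b c (br (emb h) x).
Proof. by rewrite /eig brJ brHH br0l add0r => ->; rewrite brZr. Qed.

Section Proj.
Variables (h : H) (mu : C).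
Definition Lop (nu : C) x := (mu - nu)^-1 *: (br (emb h) x - nu *: x).
Definition Pop (s : seq C) x := foldr Lop x s.

Lemma LopD nu x y : Lop nu (x + y) = Lop nu x + Lop nu y.
Proof. by rewrite /Lop -scalerDr brDr [nu *: (x + y)]scalerDr opprD addrACA. Qed.
Lemma Lop0 nu : Lop nu 0 = 0.
Proof. by rewrite /Lop br0r scaler0 subr0 scaler0. Qed.
Lemma PopD s x y : Pop s (x + y) = Pop s x + Pop s y.
Proof. by elim: s => //= nu s IH; rewrite IH LopD. Qed.
Lemma Pop0 s : Pop s 0 = 0.
Proof. by elim: s => //= nu s ->; rewrite Lop0. Qed.
Lemma Popsum s I (r : seq I) (F : I -> G) :
  Pop s (\sum_(i <- r) F i) = \sum_(i <- r) Pop s (F i).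
Proof. by elim/big_rec2: _ => [|i a b _ <-]; rewrite ?Pop0 ?PopD. Qed.
Lemma Pop_eigb s b c x : eig b c x -> eig b c (Pop s x).
Proof.
elim: s => //= nu s IH /IH e; rewrite /eig /Lop brZr brBr brZr e.
by rewrite (eig_comm h e) scalerA mulrC -scalerA -scalerBr scalerA mulrC -scalerA.
Qed.
Lemma Pop_eigh s lam x : eig h lam x ->
  Pop s x = (\prod_(nu <- s) ((mu - nu)^-1 * (lam - nu))) *: x.
Proof.
move=> e; elim: s => /= [|nu s ->]; first by rewrite big_nil scale1r.
rewrite big_cons /Lop brZr e scalerA (scalerA nu) -scalerBl !scalerA.
by congr (_ *: _); ring.
Qed.
End Proj.

Lemma proj_step (ga : H -> C) z (hz : root_space br emb ga z) h y :
  exists y', [/\ eig h (- ga h) y', B z y' = B z y &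
                 forall b c, eig b c y -> eig b c y'].
Proof.
have [n [lam [v [ev ->]]]] := hDiag h y.
set mu := - ga h.
pose s := [seq lam k | k <- [seq k <- enum 'I_n | lam k != mu]].
have Pv k : Pop h mu s (v k) = (lam k == mu)%:R *: v k.
  rewrite (Pop_eigh _ _ (ev k)); case: eqP => [->|/eqP ne].
    rewrite big_seq big1 ?scale1r // => nu /mapP [k' + ->].
    by rewrite mem_filter => /andP [nk' _]; rewrite mulVf // subr_eq0 eq_sym.
  rewrite /= scale0r; apply/eqP; rewrite scaler_eq0; apply/orP; left.
  rewrite prodf_seq_eq0; apply/hasP; exists (lam k).
    apply/mapP; exists k => //; by rewrite mem_filter ne mem_enum.
  by rewrite subrr mulr0 eqxx.
exists (Pop h mu s (\sum_(k < n) v k)); split.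
- rewrite /eig Popsum brsumr scaler_sumr; apply: eq_bigr => k _.
  rewrite Pv brZr (ev k); case: eqP => [->|_]; by rewrite ?scale0r ?scaler0 ?scale1r.
- rewrite Popsum !Bsumr; apply: eq_bigr => k _; rewrite Pv.
  case: eqP => [_|/eqP ne]; first by rewrite scale1r.
  rewrite scale0r B0r.
  have : lam k * B z (v k) = mu * B z (v k).
    by rewrite -BZr -(ev k) -Binv brC hz -scaleNr BZl.
  move/eqP; rewrite -subr_eq0 -mulrBl mulf_eq0 subr_eq0 (negPf ne) /=.
  by move/eqP.
- by move=> b c e; apply: Pop_eigb.
Qed.

Lemma proj_list (ga : H -> C) z (hz : root_space br emb ga z) (l : seq H) y :
  exists y', (forall b, b \in l -> eig b (- ga b) y') /\ B z y' = B z y.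
Proof.
elim: l => [|b l [y1 [e1 B1]]]; first by exists y.
have [y2 [e2 B2 p2]] := proj_step hz b y1.
exists y2; split; last by rewrite B2.
by move=> b'; rewrite inE => /orP [/eqP ->|/e1 /p2].
Qed.

Lemma proj (ga : H -> C) z : lin ga -> root_space br emb ga z -> forall y,
  exists y', root_space br emb (fun h => - ga h) y' /\ B z y' = B z y.
Proof.
move=> L hz y.
have [y' [e B']] := proj_list hz bas y.
exists y'; split => // h.
rewrite (basis_expand h) emb_sum brsuml lin_sum // -sumrN scaler_suml.
apply: eq_bigr => i _.
rewrite emb_scale.
rewrite brZl e ?linZ // ?scalerA ?mulrN //.
by apply: mem_nth; rewrite size_tuple.
Qed.


Lemma Bsuml I (r : seq I) (F : I -> G) z :
  B (\sum_(i <- r) F i) z = \sum_(i <- r) B (F i) z.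
Proof. by elim/big_rec2: _ => [|i a b _ <-]; rewrite ?B0l ?BDl. Qed.

Lemma BH_nondeg t : (forall h, B (emb t) (emb h) = 0) -> t = 0.
Proof.
move=> Ht; apply: emb_inj; rewrite emb0; apply: Bnondeg => y.
have L0 : lin (fun _ : H => 0) by move=> a h k; rewrite mulr0 addr0.
have rz : root_space br emb (fun _ => 0) (emb t) by move=> h; rewrite brHH scale0r.
have [y' [ry' <-]] := proj L0 rz y.
have [h' ->] : exists h', y' = emb h'.
  by apply: selfcent => h; rewrite ry' oppr0 scale0r.
exact: Ht.
Qed.

Local Notation n0 := (\dim (fullv : {vspace H})).
Definition bb (i : 'I_n0) : H := bas`_i.

Lemma B_comb (u : 'I_n0 -> C) h :
  B (emb (\sum_i u i *: bb i)) (emb h) = \sum_i u i * B (emb (bb i)) (emb h).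
Proof. by rewrite emb_sum Bsuml; apply: eq_bigr => i _; rewrite emb_scale BZl. Qed.

Lemma B_basis_ext (t : H) (al : H -> C) : lin al ->
  (forall i, B (emb t) (emb (bb i)) = al (bb i)) -> forall h, B (emb t) (emb h) = al h.
Proof.
move=> L E h; rewrite [in RHS](basis_expand h) lin_sum // [in LHS](basis_expand h).
rewrite emb_sum BC Bsuml; apply: eq_bigr => i _.
by rewrite emb_scale BZl linZ // BC E.
Qed.

Lemma bas_free : free bas.
Proof. by case/andP: (vbasisP (fullv : {vspace H})). Qed.

Definition Mg : 'M[C]_n0 := \matrix_(i, j) B (emb (bb i)) (emb (bb j)).

Lemma Mg_unit : Mg \in unitmx.
Proof.
rewrite -row_free_unit -kermx_eq0; apply/rowV0P => v /sub_kermxP vM.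
have t0 : \sum_i v 0 i *: bb i = 0.
  apply: BH_nondeg; apply: (B_basis_ext (al := fun _ => 0)).
    by move=> a h k; rewrite mulr0 addr0.
  move=> j; rewrite B_comb.
  move/matrixP/(_ 0 j): vM; rewrite !mxE => E; apply: etrans E.
  by apply: eq_bigr => i _; rewrite mxE.
apply/rowP => i; rewrite mxE.
exact: (freeP bas_free (fun i => v 0 i) t0 i).
Qed.

Lemma tvec_ex (al : H -> C) : lin al -> exists t, forall h, B (emb t) (emb h) = al h.
Proof.
move=> L.
pose a : 'rV[C]_n0 := \row_j al (bb j).
pose u := a *m invmx Mg.
have uM : u *m Mg = a by rewrite /u mulmxKV // Mg_unit.
exists (\sum_i u 0 i *: bb i); apply: B_basis_ext => // j.
rewrite B_comb; move/matrixP/(_ 0 j): uM; rewrite !mxE => E; apply: etrans E.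
by apply: eq_bigr => i _; rewrite /Mg !mxE.
Qed.

Lemma tvecP (al : H -> C) : lin al -> forall h, B (emb (tvec B emb al)) (emb h) = al h.
Proof.
move=> L; rewrite /tvec.
exact: (epsilon_spec (inhabits (0 : H)) (fun t => forall h, B (emb t) (emb h) = al h) (tvec_ex L)).
Qed.

Lemma tvec_uniq (al : H -> C) t : lin al -> (forall h, B (emb t) (emb h) = al h) -> t = tvec B emb al.
Proof.
move=> L E; apply/eqP; rewrite -subr_eq0; apply/eqP; apply: BH_nondeg => h.
by rewrite emb_add -scaleN1r emb_scale BDl BZl E tvecP // mulN1r subrr.
Qed.

Local Notation tv := (tvec B emb).
Local Notation hf := (hform B emb).

Lemma hformC u v : hf u v = hf v u.
Proof. by rewrite /hform BC. Qed.
Lemma hformE u v : lin v -> hf u v = v (tv u).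
Proof. by move=> L; rewrite /hform BC tvecP. Qed.


Lemma last_nz (f : G -> G) x : x != 0 -> (exists m, iter m f x = 0) ->
  exists p, iter p f x != 0 /\ iter p.+1 f x = 0.
Proof.
move=> nx ex.
have ex' : exists m, iter m f x == 0 by case: ex => m hm; exists m; rewrite hm.
case: (ex_minnP ex') => m /eqP hm hmin.
case: m hm hmin => [|p] hm hmin; first by move: hm nx => /= ->; rewrite eqxx.
exists p; split => //; apply/negP => /hmin; by rewrite ltnn.
Qed.

Lemma iter_zero (f : G -> G) : f 0 = 0 -> forall k, iter k f 0 = 0.
Proof. by move=> f0; elim=> //= k ->. Qed.

Lemma rs_shift (ga mu : H -> C) E y : root_space br emb ga E ->
  (forall h, br (emb h) y = mu h *: y) ->
  forall k h, br (emb h) (iter k (br E) y) = (mu h + k%:R * ga h) *: iter k (br E) y.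
Proof.
move=> rE ry; elim=> [|k IH] h /=; first by rewrite ry mul0r addr0.
rewrite brJ rE brZl IH brZr -scalerDl; congr (_ *: _).
by rewrite mulrSr; ring.
Qed.

Lemma sl2_string (ga ga' : H -> C) E F t :
  root_space br emb ga E -> root_space br emb ga' F -> (forall h, ga' h = - ga h) ->
  br E F = emb t -> ga t = 2 ->
  (forall y, exists m, iter m (br E) y = 0) -> (forall y, exists m, iter m (br F) y = 0) ->
  forall be x, x != 0 -> root_space br emb be x ->
  exists p q : nat, be t = q%:R - 2 * p%:R /\
    forall j, (j <= q)%N -> is_root br emb (fun h => be h + (p%:R - j%:R) * ga h).
Proof.
move=> rE rF ga'E EF gat nE nF be x nx rx.
have [p [ny Ey]] := last_nz nx (nE x).
set y := iter p (br E) x in ny Ey.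
have ry h : br (emb h) y = (be h + p%:R * ga h) *: y by exact: rs_shift.
pose mu := fun h => be h + p%:R * ga h.
have rz : forall j h, br (emb h) (iter j (br F) y) = (mu h - j%:R * ga h) *: iter j (br F) y.
  move=> j h; rewrite (rs_shift rF ry j h) ga'E; congr (_ *: _); rewrite /mu; ring.
have key : forall j, br E (iter j.+1 (br F) y) = (j.+1%:R * (mu t - j%:R)) *: iter j (br F) y.
  elim=> [|j IH].
    by rewrite /= brJ EF -iterS Ey br0r addr0 ry /mu mul1r subr0.
  rewrite [iter j.+2 _ _]iterS brJ EF rz IH brZr -scalerDl; congr (_ *: _).
  rewrite gat /mu !mulrSr; ring.
have [q [nq Fq]] := last_nz ny (nF y).
have muq : mu t = q%:R.
  have := key q; rewrite Fq br0r => /esym/eqP; rewrite scaler_eq0 (negPf nq) orbF.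
  rewrite mulf_eq0 pnatr_eq0 /= subr_eq0 => /eqP //.
exists p, q; split.
  by move: muq; rewrite /mu gat => <-; ring.
move=> j jq; exists (iter j (br F) y); split.
  apply/negP => /eqP zj; move: nq; rewrite -(subnK jq) iterD zj iter_zero ?eqxx //.
  exact: br0r.
by move=> h; rewrite rz /mu; congr (_ *: _); ring.
Qed.


Lemma linNf al : lin al -> lin (fun h => - al h).
Proof. by move=> L a h k; rewrite L opprD mulrN. Qed.

Lemma hfN al : lin al -> hf (fun h => - al h) (fun h => - al h) = hf al al.
Proof.
move=> L; have LN := linNf L.
rewrite (hformE _ LN) /= -(hformE (fun h => - al h) L) hformC (hformE _ LN) /=.
by rewrite opprK (hformE _ L).
Qed.

Lemma ex_nonorth e : e != 0 -> exists y, B e y != 0.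
Proof.
move=> ne; case: (pselect (exists y, B e y != 0)) => [//|Hn].
case/negP: ne; apply/eqP; apply: Bnondeg => y.
apply/eqP; apply/negPn/negP => Hy; apply: Hn; by exists y.
Qed.

Lemma refl_root al be : Rx br B emb al -> is_root br emb be ->
  is_root br emb (fun h => be h - (2 * hf al be / hf al al) * al h).
Proof.
move=> Ral rbe; have [ral nal] := Ral.
have La := root_lin ral; have Lb := root_lin rbe.
case: ral => e [ne re].
have [y0 ny0] := ex_nonorth ne.
have [f [rf Bf]] := proj La re y0.
set d := B e f; have nd : d != 0 by rewrite /d Bf.
have [t0 et0] : exists t0, br e f = emb t0.
  by apply: selfcent => h; rewrite brJ re rf brZl brZr scaleNr subrr.
have t0E : t0 = d *: tv al.
  apply/eqP; rewrite -subr_eq0; apply/eqP; apply: BH_nondeg => h.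
  rewrite emb_add -scaleN1r emb_scale BDl BZl emb_scale BZl tvecP //.
  rewrite -et0 Binv brC rf scaleNr opprK BZr -/d; ring.
set a := hf al al.
have aE : a = al (tv al) by rewrite /a hformE.
pose E := e; pose F := (2 / (a * d)) *: f; pose t := (2 / a) *: tv al.
have EF : br E F = emb t.
  rewrite /E /F /t brZr et0 t0E emb_scale emb_scale scalerA; congr (_ *: _).
  by field; rewrite nal nd.
have alt : al t = 2 by rewrite /t linZ // -aE; field.
have rF : root_space br emb (fun h => - al h) F by move=> h; rewrite /F brZr rf !scalerA mulrC.
have nF : F != 0.
  rewrite /F scaler_eq0 negb_or; apply/andP; split.
    by rewrite mulf_neq0 ?invr_eq0 ?mulf_neq0 ?pnatr_eq0.
  by apply/negP => /eqP f0; move: nd; rewrite /d f0 B0r eqxx.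
have RxF : Rx br B emb (fun h => - al h).
  split; [exists F; split=> // | rewrite hfN //].
have nilE : forall y : G, exists m : nat, iter m (br E) y = 0 by exact: (hNil Ral re).
have nilF : forall y : G, exists m : nat, iter m (br F) y = 0 by exact: (hNil RxF rF).
set K := 2 * hf al be / a.
have KE : be t = K by rewrite /t linZ // /K (hformE _ Lb); field; rewrite /a.
case: rbe => x [nx rx].
have [p [q [bq roots]]] := sl2_string re rF (fun h => erefl) EF alt nilE nilF nx rx.
case: (leqP (p + p) q) => hpq.
  have := roots (q - p)%N (leq_subr _ _).
  have -> : (fun h => be h + (p%:R - (q - p)%:R) * al h) = (fun h => be h - K * al h) => //.
  apply: funext => h; rewrite natrB; last by apply: leq_trans hpq; exact: leq_addl.
  by rewrite -KE bq; ring.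
have EF' : br F E = emb (- t) by rewrite brC EF -scaleN1r -emb_scale scaleN1r.
have alt' : - al (- t) = 2 by rewrite linN // opprK.
have rE' : root_space br emb al E by exact: re.
have [p' [q' [bq' roots']]] := sl2_string rF rE' (fun h => esym (opprK _)) EF' alt' nilF nilE nx rx.
have hq' : (p' + p' < q')%N.
  have e1 : be (- t) = - be t by rewrite linN.
  rewrite bq' bq in e1.
  have : (q' + q)%:R = (p' + p' + (p + p))%:R :> C.
    rewrite !natrD; apply/eqP; rewrite -subr_eq0; apply/eqP; move: e1.
    by move/eqP; rewrite -subr_eq0 => /eqP e1; rewrite -[RHS]e1; ring.
  move/eqP; rewrite eqr_nat => /eqP; lia.
have := roots' (q' - p')%N (leq_subr _ _).
have -> : (fun h => be h + (p'%:R - (q' - p')%:R) * - al h) = (fun h => be h - K * al h) => //.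
apply: funext => h; rewrite natrB; last by apply: leq_trans (ltnW hq'); exact: leq_addl.
have : - K = q'%:R - 2 * p'%:R by rewrite -KE -bq' linN.
move=> eK; have -> : K = - (q'%:R - 2 * p'%:R) by rewrite -eK opprK.
ring.
Qed.


Local Notation Rxx := (Rx br B emb).
Local Notation rch := (rchain br B emb).
Local Notation Vr := (Vrad br B emb).
Local Notation Vs := (Vsp br emb).

Lemma rchain_l al ga : rch al ga -> Rxx al. Proof. by case. Qed.
Lemma rchain_r al ga : rch al ga -> Rxx ga. Proof. by elim. Qed.
Lemma rchain_app al be ga : rch al be -> Rxx ga -> hf be ga != 0 -> rch al ga.
Proof.
elim=> [a Ra|a b g Ra nab _ IH] Rg nbg.
  by apply: rchain_step nbg (rchain_refl Rg).
by apply: rchain_step nab (IH Rg nbg).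
Qed.

Lemma split_l m k (j : 'I_m) : split (lshift k j) = inl j. Proof. exact: (unsplitK (inl j)). Qed.
Lemma split_r m k (j : 'I_k) : split (rshift m j) = inr j. Proof. exact: (unsplitK (inr j)). Qed.

Lemma rs_comb (S : (H -> C) -> Prop) u w r : real_span S u -> real_span S w -> r \is Num.real ->
  real_span S (fun h => u h + r * w h).
Proof.
move=> [n1 [r1 [a1 [H1 E1]]]] [n2 [r2 [a2 [H2 E2]]]] rr.
exists (n1 + n2)%N, (fun i => match split i with inl j => r1 j | inr j => r * r2 j end),
  (fun i => match split i with inl j => a1 j | inr j => a2 j end); split.
  move=> i; case: (split i) => j; first exact: H1.
  by have [? ?] := H2 j; split => //; apply: rpredM.
move=> h; rewrite big_split_ord /= E1 E2 mulr_sumr; congr (_ + _); apply: eq_bigr => j _.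
  by rewrite split_l.
by rewrite split_r mulrA.
Qed.

Lemma rs_in (S : (H -> C) -> Prop) a : S a -> real_span S a.
Proof.
move=> Sa; exists 1%N, (fun _ => 1), (fun _ => a); split => [_|h]; first by rewrite rpred1.
by rewrite big_ord1 mul1r.
Qed.

Lemma rs_mono (S S' : (H -> C) -> Prop) u : (forall a, S a -> S' a) -> real_span S u -> real_span S' u.
Proof. by move=> SS [m [r [a [Ha E]]]]; exists m, r, a; split => // k; have [? ?] := Ha k; split => //; apply: SS. Qed.

Lemma rs_lin (S : (H -> C) -> Prop) u : (forall a, S a -> lin a) -> real_span S u -> lin u.
Proof.
move=> SL [m [r [a [Ha E]]]] x h k; rewrite !E mulr_sumr -big_split; apply: eq_bigr => i _ /=.
by have [_ /SL ->] := Ha i; ring.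
Qed.

Lemma Vs_lin u : Vs u -> lin u. Proof. by apply: rs_lin => a; apply: root_lin. Qed.
Lemma Vr_lin u : Vr u -> lin u. Proof. by case=> /Vs_lin. Qed.

Lemma hf_combl u w z r : lin u -> lin w -> lin z ->
  hf (fun h => u h + r * w h) z = hf u z + r * hf w z.
Proof.
move=> Lu Lw Lz; have Lc : lin (fun h => u h + r * w h) by move=> x h k; rewrite Lu Lw; ring.
by rewrite hformC (hformE _ Lc) (hformC u) (hformE _ Lu) (hformC w) (hformE _ Lw).
Qed.
Lemma hf_combr u w z r : lin u -> lin w -> lin z ->
  hf z (fun h => u h + r * w h) = hf z u + r * hf z w.
Proof. by move=> Lu Lw Lz; rewrite hformC hf_combl // hformC (hformC w). Qed.

Lemma Vr_comb u w r : Vr u -> Vr w -> r \is Num.real -> Vr (fun h => u h + r * w h).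
Proof.
move=> [Su Ou] [Sw Ow] rr; split; first exact: rs_comb.
move=> z Sz; rewrite (hf_combl _ (Vs_lin Su) (Vs_lin Sw) (Vs_lin Sz)) (Ou z Sz) (Ow z Sz); ring.
Qed.

Definition eqv (u w : H -> C) := Vr (fun h => u h - w h).

Lemma eqv_sym u w : eqv u w -> eqv w u.
Proof.
move=> E; have r2 : (-2 : C) \is Num.real by rewrite rpredN rpred_nat.
have := Vr_comb E E r2.
by congr Vr; apply: funext => h; ring.
Qed.
Lemma eqv_trans u v w : eqv u v -> eqv v w -> eqv u w.
Proof.
move=> E1 E2; have r1 : (1 : C) \is Num.real by rewrite rpred1.
have := Vr_comb E1 E2 r1.
by congr Vr; apply: funext => h; ring.
Qed.


Definition refl (al u : H -> C) : H -> C :=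
  fun h => u h - (2 * u (tv al) / hf al al) * al h.

Lemma refl_comb al u w r :
  refl al (fun h => u h + r * w h) = fun h => refl al u h + r * refl al w h.
Proof. by apply: funext => h; rewrite /refl; ring. Qed.

Lemma refl_sum al m (r : 'I_m -> C) (a : 'I_m -> H -> C) :
  refl al (fun h => \sum_k r k * a k h) = fun h => \sum_k r k * refl al (a k) h.
Proof.
apply: funext => h; rewrite /refl mulr_sumr mulr_suml mulr_suml -sumrB.
by apply: eq_bigr => k _; ring.
Qed.

Lemma refl_lin al u : lin al -> lin u -> lin (refl al u).
Proof. by move=> La Lu x h k; rewrite /refl La Lu; ring. Qed.

Lemma hfE al : lin al -> hf al al = al (tv al).
Proof. by move=> La; rewrite hformE. Qed.

Lemma refl_self al : lin al -> hf al al != 0 -> refl al al = fun h => - al h.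
Proof.
move=> La na; apply: funext => h; rewrite /refl -(hfE La).
by field.
Qed.

Lemma refl_invol al u : lin al -> hf al al != 0 -> refl al (refl al u) = u.
Proof.
move=> La na; apply: funext => h; rewrite /refl -(hfE La).
by field.
Qed.

Lemma refl_fix al u : u (tv al) = 0 -> refl al u = u.
Proof. by move=> u0; apply: funext => h; rewrite /refl u0 mulr0 mul0r mul0r subr0. Qed.

Definition fcomb (u : H -> C) (r : C) (w : H -> C) := fun h => u h + r * w h.
Lemma fcomb_lin u r w : lin u -> lin w -> lin (fcomb u r w).
Proof. by move=> Lu Lw x h k; rewrite /fcomb Lu Lw; ring. Qed.
Lemma hf_fcombl u w z r : lin u -> lin w -> lin z ->
  hf (fcomb u r w) z = hf u z + r * hf w z.
Proof. exact: hf_combl. Qed.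
Lemma hf_fcombr u w z r : lin u -> lin w -> lin z ->
  hf z (fcomb u r w) = hf z u + r * hf z w.
Proof. exact: hf_combr. Qed.

Lemma refl_hf al u w : lin al -> hf al al != 0 -> lin u -> lin w ->
  hf (refl al u) (refl al w) = hf u w.
Proof.
move=> La na Lu Lw.
have e u' : refl al u' = fcomb u' (- (2 * u' (tv al) / hf al al)) al.
  by apply: funext => h; rewrite /refl /fcomb; ring.
rewrite !e (hf_fcombl _ Lu La (fcomb_lin _ Lw La)).
rewrite (hf_fcombr _ Lw La Lu) (hf_fcombr _ Lw La La).
rewrite (hformC u al) -(hformE al Lu) -(hformE al Lw).
by field.
Qed.

Lemma refl_hf_self al u : lin al -> hf al al != 0 -> lin u -> hf al (refl al u) = - hf al u.
Proof.
move=> La na Lu; rewrite (hformE _ (refl_lin La Lu)) /refl -(hfE La) -(hformE al Lu).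
by field.
Qed.


Lemma Vr_eval d z : Vr d -> Vs z -> d (tv z) = 0.
Proof. by move=> Vd Sz; rewrite -(hformE z (Vr_lin Vd)) hformC; case: Vd => _ ->. Qed.

Lemma Vr0 : Vr (fun _ => 0).
Proof.
have L0 : lin (fun _ : H => 0) by move=> a h k; rewrite mulr0 addr0.
split; first by exists 0%N, (fun _ => 0), (fun _ => fun _ => 0); split => [k|h]; [by case: k | by rewrite big_ord0].
by move=> w Sw; rewrite hformC (hformE _ L0).
Qed.

Lemma Vr_sum m (r : 'I_m -> C) (d : 'I_m -> H -> C) :
  (forall k, r k \is Num.real) -> (forall k, Vr (d k)) -> Vr (fun h => \sum_k r k * d k h).
Proof.
elim: m r d => [|m IH] r d rr Vd.
  have -> : (fun h => \sum_(k < 0) r k * d k h) = (fun _ => 0) by apply: funext => h; rewrite big_ord0.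
  exact: Vr0.
have := Vr_comb (IH (fun k => r (lift ord_max k)) (fun k => d (lift ord_max k)) (fun k => rr _) (fun k => Vd _))
  (Vd ord_max) (rr ord_max).
congr Vr; apply: funext => h; rewrite big_ord_recr /=; congr (_ + _).
by apply: eq_bigr => k _; congr (r _ * d _ h); apply: val_inj; rewrite /= /bump leqNgt ltn_ord.
Qed.

Section Comb.
Variables (al0 : H -> C) (hal0 : Rxx al0) (c : C) (hc : c != 0).
Local Notation RC := (rch al0).
Local Notation Vi := (real_span RC).
Hypothesis hreal : forall u v, Vi u -> Vi v -> c * hf u v \is Num.real.
Hypothesis hpos : forall al, RC al -> 0 < c * hf al al.
Variables (n : nat) (s : 'I_n -> H -> C) (k0 : 'I_n).
Hypothesis hfin : forall al, RC al -> exists k, Vr (fun h => al h - s k h).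

Lemma RC_Rx a : RC a -> Rxx a. Proof. exact: rchain_r. Qed.
Lemma RC_root a : RC a -> is_root br emb a. Proof. by case/RC_Rx. Qed.
Lemma RC_lin a : RC a -> lin a. Proof. by move/RC_root/root_lin. Qed.
Lemma RC_nz a : RC a -> hf a a != 0. Proof. by case/RC_Rx. Qed.
Lemma RC_Vs a : RC a -> Vs a. Proof. by move/RC_root; apply: rs_in. Qed.
Lemma Vi_Vs u : Vi u -> Vs u. Proof. by apply: rs_mono => a /RC_root. Qed.
Lemma Vi_lin u : Vi u -> lin u. Proof. by move/Vi_Vs/Vs_lin. Qed.
Lemma RC_Vi a : RC a -> Vi a. Proof. exact: rs_in. Qed.
Lemma RC0 : RC al0. Proof. exact: rchain_refl. Qed.

Lemma refl_Vi al u : RC al -> Vi u -> Vi (refl al u).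
Proof.
move=> Ra Vu; have La := RC_lin Ra; have Lu := Vi_lin Vu.
have -> : refl al u = fun h => u h + (- (2 * ((c * hf al u) / (c * hf al al)))) * al h.
  apply: funext => h; rewrite /refl -(hformE al Lu); field.
  by rewrite hc RC_nz.
apply: rs_comb => //; first exact: RC_Vi.
rewrite rpredN rpredM ?rpred_nat // rpred_div //; apply: hreal => //; exact: RC_Vi.
Qed.

Lemma refl_RC al be : RC al -> RC be -> RC (refl al be).
Proof.
move=> Ra Rb; have La := RC_lin Ra; have Lb := RC_lin Rb.
have rt : is_root br emb (refl al be).
  have := refl_root (RC_Rx Ra) (RC_root Rb).
  by congr is_root; apply: funext => h; rewrite /refl (hformE al Lb).
have Rxr : Rxx (refl al be) by split => //; rewrite refl_hf ?RC_nz.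
case: (eqVneq (hf al be) 0) => hab.
  by rewrite refl_fix // -(hformE al Lb).
apply: (rchain_app Ra Rxr).
by rewrite (refl_hf_self La (RC_nz Ra) Lb) oppr_eq0.
Qed.

Fixpoint words (ws : seq (H -> C)) : Prop :=
  if ws is a :: ws' then RC a /\ words ws' else True.
Lemma words_rcons ws a : words ws -> RC a -> words (rcons ws a).
Proof. by elim: ws => //= b ws IH [Rb Wb] Ra; split => //; apply: IH. Qed.

Definition act (ws : seq (H -> C)) u := foldr refl u ws.
Lemma act_rcons ws a u : act (rcons ws a) u = act ws (refl a u).
Proof. by rewrite /act foldr_rcons. Qed.
Lemma act_Vi ws u : words ws -> Vi u -> Vi (act ws u).
Proof. by elim: ws => //= a ws IH [Ra Ww] Vu; apply: refl_Vi => //; apply: IH. Qed.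
Lemma act_RC ws u : words ws -> RC u -> RC (act ws u).
Proof. by elim: ws => //= a ws IH [Ra Ww] Vu; apply: refl_RC => //; apply: IH. Qed.
Lemma act_comb ws u r w : act ws (fcomb u r w) = fcomb (act ws u) r (act ws w).
Proof. by elim: ws => //= a ws ->; rewrite /fcomb refl_comb. Qed.
Lemma act_sum ws m (r : 'I_m -> C) (a : 'I_m -> H -> C) :
  act ws (fun h => \sum_k r k * a k h) = fun h => \sum_k r k * act ws (a k) h.
Proof. by elim: ws => //= b ws ->; rewrite refl_sum. Qed.
Lemma act_fix ws v : words ws -> (forall a, RC a -> v (tv a) = 0) -> act ws v = v.
Proof. by elim: ws => //= a ws IH [Ra Ww] Hv; rewrite IH // refl_fix // Hv. Qed.
Lemma act_eqv ws u w : words ws -> eqv u w -> eqv (act ws u) (act ws w).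
Proof.
elim: ws => //= a ws IH [Ra Ww] E; have E' := IH Ww E; rewrite /eqv.
have -> : (fun h => refl a (act ws u) h - refl a (act ws w) h) = (fun h => act ws u h - act ws w h) => //.
have z : act ws u (tv a) = act ws w (tv a).
  by apply/eqP; rewrite -subr_eq0; apply/eqP; exact: (Vr_eval E' (RC_Vs Ra)).
by apply: funext => h; rewrite /refl z; ring.
Qed.

Definition cls (u : H -> C) : 'I_n := epsilon (inhabits k0) (fun k => eqv u (s k)).
Lemma cls_spec b : RC b -> eqv b (s (cls b)).
Proof. by move=> Rb; rewrite /cls; apply: (epsilon_spec (inhabits k0) (fun k => eqv b (s k))); apply: hfin. Qed.
Lemma cls_eq u u' : eqv u u' -> cls u = cls u'.
Proof.
move=> E; rewrite /cls; congr epsilon; apply: funext => k; apply: propext; split => E2.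
  exact: eqv_trans (eqv_sym E) E2.
exact: eqv_trans E E2.
Qed.

Definition good k := exists b, RC b /\ eqv b (s k).
Definition rep k := epsilon (inhabits al0) (fun b => RC b /\ eqv b (s k)).
Lemma rep_spec k : good k -> RC (rep k) /\ eqv (rep k) (s k).
Proof. by move=> g; rewrite /rep; apply: (epsilon_spec (inhabits al0) (fun b => RC b /\ eqv b (s k))). Qed.

Definition sig (ws : seq (H -> C)) : {ffun 'I_n -> 'I_n} :=
  [ffun k => if pselect (good k) then cls (act ws (rep k)) else k].

Lemma sig_act ws ws' b : words ws -> words ws' -> sig ws = sig ws' -> RC b ->
  eqv (act ws b) (act ws' b).
Proof.
move=> W W' Hs Rb; have [k Ek] : exists k, eqv b (s k) by exists (cls b); exact: cls_spec.
have gk : good k by exists b.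
have [Rr Er] := rep_spec gk.
have Ebr : eqv b (rep k) := eqv_trans Ek (eqv_sym Er).
have e1 : eqv (act ws b) (s (sig ws k)).
  rewrite ffunE; case: (pselect (good k)) => [p|/(_ gk) //] /=.
  exact: eqv_trans (act_eqv W Ebr) (cls_spec (act_RC W Rr)).
have e2 : eqv (act ws' b) (s (sig ws' k)).
  rewrite ffunE; case: (pselect (good k)) => [p|/(_ gk) //] /=.
  exact: eqv_trans (act_eqv W' Ebr) (cls_spec (act_RC W' Rr)).
by rewrite Hs in e1; exact: eqv_trans e1 (eqv_sym e2).
Qed.

Lemma sig_act_Vi ws ws' x : words ws -> words ws' -> sig ws = sig ws' -> Vi x ->
  eqv (act ws x) (act ws' x).
Proof.
move=> W W' Hs [m [r [a [Ha E]]]].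
have -> : x = fun h => \sum_k r k * a k h by apply: funext.
rewrite !act_sum /eqv.
have := Vr_sum (fun k => (Ha k).1) (fun k => sig_act W W' Hs (Ha k).2).
by congr Vr; apply: funext => h; rewrite -sumrB; apply: eq_bigr => k _; ring.
Qed.

Lemma act_neg ws u : act ws (fun h => - u h) = fun h => - act ws u h.
Proof.
elim: ws => //= a ws ->; apply: funext => h; rewrite /refl; ring.
Qed.

Definition F : {set {ffun 'I_n -> 'I_n}} :=
  [set p | `[< exists ws, words ws /\ sig ws = p >] ].
Lemma inF p : p \in F <-> exists ws, words ws /\ sig ws = p.
Proof. by rewrite inE; split => /asboolP. Qed.

Definition wsel p := epsilon (inhabits [::]) (fun ws => words ws /\ sig ws = p).
Lemma wsel_spec p : p \in F -> words (wsel p) /\ sig (wsel p) = p.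
Proof. by move/inF => ex; rewrite /wsel; apply: (epsilon_spec (inhabits [::]) (fun ws => words ws /\ sig ws = p)). Qed.

Definition phi a p := sig (rcons (wsel p) a).

Lemma phiF a p : RC a -> p \in F -> phi a p \in F.
Proof. by move=> Ra Fp; apply/inF; exists (rcons (wsel p) a); split => //; apply: words_rcons => //; case: (wsel_spec Fp). Qed.

Lemma phi_inj a : RC a -> {in F &, injective (phi a)}.
Proof.
move=> Ra p1 p2 F1 F2 Hp.
have [W1 S1] := wsel_spec F1; have [W2 S2] := wsel_spec F2.
rewrite -S1 -S2; apply/ffunP => k; rewrite !ffunE.
case: (pselect (good k)) => [g|//] /=.
apply: cls_eq; have [Rr _] := rep_spec g.
have := sig_act (words_rcons W1 Ra) (words_rcons W2 Ra) Hp (refl_RC Ra Rr).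
by rewrite !act_rcons (refl_invol _ (RC_lin Ra) (RC_nz Ra)).
Qed.

Lemma sum_refl a (Phi : seq (H -> C) -> C) : RC a ->
  (forall ws ws', words ws -> words ws' -> sig ws = sig ws' -> Phi ws = Phi ws') ->
  \sum_(p in F) Phi (rcons (wsel p) a) = \sum_(p in F) Phi (wsel p).
Proof.
move=> Ra HP.
have E p : p \in F -> Phi (rcons (wsel p) a) = Phi (wsel (phi a p)).
  move=> Fp; have [W S] := wsel_spec Fp; have [W' S'] := wsel_spec (phiF Ra Fp).
  by apply: HP => //; exact: words_rcons.
rewrite (eq_bigr _ E) -(big_imset (fun p => Phi (wsel p)) (phi_inj Ra)).
have -> : phi a @: F = F => //.
apply/eqP; rewrite eqEcard card_in_imset ?leqnn ?andbT; last exact: phi_inj.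
by apply/subsetP => x /imsetP [p Fp ->]; apply: phiF.
Qed.

Lemma F_nonempty : sig [::] \in F.
Proof. by apply/inF; exists [::]. Qed.

Lemma eqv_eval u w z : eqv u w -> Vs z -> u (tv z) = w (tv z).
Proof. by move=> E Sz; apply/eqP; rewrite -subr_eq0; apply/eqP; exact: (Vr_eval E Sz). Qed.

Lemma RadV v : Vi v -> (forall b, RC b -> hf v b = 0) -> Vr v.
Proof.
move=> Vv Hv; have Lv := Vi_lin Vv.
have vt b : RC b -> v (tv b) = 0 by move=> Rb; rewrite -(hformE b Lv) hformC Hv.
have key d : is_root br emb d -> v (tv d) = 0.
  move=> rd; have Sd : Vs d := rs_in rd.
  have orb b : RC b -> \sum_(p in F) act (wsel p) b (tv d) = 0.
    move=> Rb.
    have := @sum_refl b (fun ws => act ws b (tv d)) Rb.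
    have HP : forall ws ws', words ws -> words ws' -> sig ws = sig ws' ->
        act ws b (tv d) = act ws' b (tv d).
      by move=> ws ws' W W' S; apply: eqv_eval Sd; apply: sig_act.
    move/(_ HP).
    rewrite (eq_bigr (fun p => - act (wsel p) b (tv d))) => [|p _]; last first.
      by rewrite act_rcons (refl_self (RC_lin Rb) (RC_nz Rb)) act_neg.
    rewrite sumrN => e.
    have h2 : (\sum_(p in F) act (wsel p) b (tv d)) *+ 2 = 0 by rewrite mulr2n -{1}e addNr.
    by move/eqP: h2; rewrite mulrn_eq0 /= => /eqP.
  have [m [r [a [Ha E]]]] := Vv.
  have total : \sum_(p in F) act (wsel p) v (tv d) = 0.
    have -> : v = fun h => \sum_k r k * a k h by apply: funext.
    rewrite (eq_bigr (fun p => \sum_k r k * act (wsel p) (a k) (tv d))) => [|p _]; last by rewrite act_sum.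
    rewrite exchange_big /= big1 // => k _; rewrite -mulr_sumr orb ?mulr0 //; exact: (Ha k).2.
  have total2 : \sum_(p in F) act (wsel p) v (tv d) = v (tv d) *+ #|F|.
    rewrite -sumr_const; apply: eq_bigr => p Fp; rewrite act_fix //; first by case: (wsel_spec Fp).
  move: total; rewrite total2 => /eqP; rewrite mulrn_eq0 => /orP [|/eqP //].
  by rewrite cards_eq0 => /eqP F0; move: F_nonempty; rewrite F0 inE.
split; first exact: Vi_Vs.
move=> w Sw; have [m [r [a [Ha E]]]] := Sw.
rewrite (hformE v (Vs_lin Sw)) E big1 // => k _.
have [_ rk] := Ha k.
by rewrite -(hformE v (root_lin rk)) hformC (hformE _ Lv) key // mulr0.
Qed.

Definition t0 := tv al0.
Definition ev ws u := c * act ws u t0.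
Definition Q x y := \sum_(p in F) ev (wsel p) x * ev (wsel p) y.

Lemma sq_ge0 (x : C) : x \is Num.real -> 0 <= x * x.
Proof. by move=> xr; rewrite -expr2 -real_normK // exprn_ge0 // normr_ge0. Qed.

Lemma ev_real ws u : words ws -> Vi u -> ev ws u \is Num.real.
Proof.
move=> W Vu; have Va := act_Vi W Vu.
by rewrite /ev /t0 -(hformE al0 (Vi_lin Va)); apply: hreal => //; exact: RC_Vi RC0.
Qed.

Lemma ev_sig ws ws' x : words ws -> words ws' -> sig ws = sig ws' -> Vi x -> ev ws x = ev ws' x.
Proof.
move=> W W' S Vx; rewrite /ev /t0; congr (_ * _); apply: eqv_eval; first exact: sig_act_Vi.
exact: RC_Vs RC0.
Qed.

Lemma Q_sym x y : Q x y = Q y x.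
Proof. by apply: eq_bigr => p _; rewrite mulrC. Qed.

Lemma Q_refl a x y : RC a -> Vi x -> Vi y -> Q (refl a x) (refl a y) = Q x y.
Proof.
move=> Ra Vx Vy; rewrite /Q.
have := @sum_refl a (fun ws => ev ws x * ev ws y) Ra.
have HP : forall ws ws', words ws -> words ws' -> sig ws = sig ws' ->
   ev ws x * ev ws y = ev ws' x * ev ws' y.
  by move=> ws ws' W W' S; rewrite (ev_sig W W' S Vx) (ev_sig W W' S Vy).
move/(_ HP) => <-; apply: eq_bigr => p _.
by rewrite /ev !act_rcons.
Qed.

Lemma Q_key a x : RC a -> Vi x -> Q x a = (c * hf a x) * (Q a a / (c * hf a a)).
Proof.
move=> Ra Vx; have La := RC_lin Ra; have Lx := Vi_lin Vx; have na := RC_nz Ra.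
set A := hf a a; set k := 2 * x (tv a) / A.
have e1 := Q_refl Ra Vx (RC_Vi Ra).
have rx : refl a x = fcomb x (- k) a.
  by apply: funext => h; rewrite /refl /fcomb /k /A; ring.
have e2 : Q (refl a x) (refl a a) = - Q x a + k * Q a a.
  rewrite rx (refl_self La na) /Q mulr_sumr -sumrN -big_split; apply: eq_bigr => p _.
  by rewrite /ev act_comb act_neg /fcomb /=; ring.
rewrite e1 in e2.
rewrite (hformE a Lx); apply/eqP; rewrite -subr_eq0; apply/eqP.
have -> : Q x a - c * x (tv a) * (Q a a / (c * A)) = (Q x a - (- Q x a + k * Q a a)) / 2.
  by rewrite /k; field; rewrite hc na.
by rewrite -e2 subrr mul0r.
Qed.

Definition kap a := Q a a / (c * hf a a).

Lemma kap_eq a b : RC a -> RC b -> hf a b != 0 -> kap a = kap b.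
Proof.
move=> Ra Rb nab.
have e1 := Q_key Ra (RC_Vi Rb); have e2 := Q_key Rb (RC_Vi Ra).
rewrite Q_sym e2 (hformC b a) in e1.
apply: (mulfI (_ : c * hf a b != 0)); first by rewrite mulf_neq0.
exact: esym e1.
Qed.

Lemma kap_chain a g : rch a g -> RC a -> kap a = kap g.
Proof.
elim=> [a' _ //|a' b g' Ra' nab rbg IH] RCa.
have RCb : RC b := rchain_app RCa (rchain_l rbg) nab.
by rewrite (kap_eq RCa RCb nab) IH.
Qed.

Lemma Q_ge0 x : Vi x -> 0 <= Q x x.
Proof.
move=> Vx; apply: sumr_ge0 => p Fp; apply: sq_ge0; apply: ev_real => //.
by case: (wsel_spec Fp).
Qed.

Lemma kap0_pos : 0 < kap al0.
Proof.
have p0F := F_nonempty.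
have [W0 S0] := wsel_spec p0F.
have ev0 : ev (wsel (sig [::])) al0 = c * hf al0 al0.
  rewrite (ev_sig W0 (I : words [::]) S0 (RC_Vi RC0)) /ev /t0 /=.
  by rewrite (hformE al0 (RC_lin RC0)).
have Qp : 0 < Q al0 al0.
  rewrite /Q (bigD1 (sig [::])) //= ev0; apply: ltr_wpDr.
    apply: sumr_ge0 => p /andP [Fp _]; apply: sq_ge0; apply: ev_real; last exact: RC_Vi RC0.
    by case: (wsel_spec Fp).
  by apply: mulr_gt0; apply: hpos; exact: RC0.
by apply: divr_gt0 => //; apply: hpos; exact: RC0.
Qed.

Lemma Q_lin2 x v : Vi x -> Vi v -> Q x v = (c * hf x v) * kap al0.
Proof.
move=> Vx Vv; have Lx := Vi_lin Vx.
have [m [r [a [Ha E]]]] := Vv.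
have Ev : v = fun h => \sum_k r k * a k h by apply: funext.
have Qa k : Q x (a k) = (c * hf x (a k)) * kap al0.
  have Rk := (Ha k).2; rewrite (Q_key Rk Vx) (hformC (a k) x) -/(kap (a k)).
  by rewrite -(kap_chain Rk RC0).
have -> : Q x v = \sum_k r k * Q x (a k).
  have evs ws : ev ws v = \sum_k r k * ev ws (a k).
    by rewrite /ev Ev act_sum /= mulr_sumr; apply: eq_bigr => k _; ring.
  rewrite /Q (eq_bigr (fun p => \sum_k ev (wsel p) x * (r k * ev (wsel p) (a k)))) => [|p _]; last first.
    by rewrite evs mulr_sumr.
  rewrite exchange_big /=; apply: eq_bigr => k _; rewrite mulr_sumr; apply: eq_bigr => p _.
  ring.
have -> : hf x v = \sum_k r k * hf x (a k).
  rewrite (hformE x (Vi_lin Vv)) E; apply: eq_bigr => k _.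
  by rewrite (hformE x (RC_lin (Ha k).2)).
rewrite mulr_sumr mulr_suml; apply: eq_bigr => k _; rewrite Qa; ring.
Qed.

Lemma final_ii v : Vi v -> 0 <= c * hf v v.
Proof.
move=> Vv; have kp := kap0_pos.
have -> : c * hf v v = Q v v / kap al0 by rewrite (Q_lin2 Vv Vv); field; rewrite lt0r_neq0.
by apply: divr_ge0; [exact: Q_ge0 | exact: ltW].
Qed.

Lemma final_i v : Vi v -> ~ Vr v -> 0 < c * hf v v.
Proof.
move=> Vv nV; rewrite lt_def final_ii // andbT; apply/negP => /eqP z.
apply: nV; apply: RadV => // b Rb.
have kp := kap0_pos.
have Qvv : Q v v = 0 by rewrite (Q_lin2 Vv Vv) z mul0r.
have ev0 p : p \in F -> ev (wsel p) v = 0.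
  move=> Fp; have W := (wsel_spec Fp).1.
  have := psumr_eq0P (fun p (Fp : p \in F) => sq_ge0 (ev_real (wsel_spec Fp).1 Vv)) Qvv Fp.
  by move/eqP; rewrite mulf_eq0 orbb => /eqP.
have Qvb : Q v b = 0 by rewrite /Q big1 // => p Fp; rewrite ev0 // mul0r.
move: Qvb; rewrite (Q_lin2 Vv (RC_Vi Rb)) => /eqP; rewrite mulf_eq0 (negPf (lt0r_neq0 kp)) orbF mulf_eq0 (negPf hc) /=.
by move/eqP.
Qed.

End Comb.
End Main.

Theorem lemma1p9 (R : realType) (G : lmodType R[i]) (br : G -> G -> G)
    (B : G -> G -> R[i]) (H : vectType R[i]) (emb : {linear H -> G})
    (hG : gen_reductive br B emb)
    (al0 : H -> R[i]) (hal0 : Rx br B emb al0)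
    (c : R[i]) (hc : c != 0)
    (hreal : forall u v, real_span (rchain br B emb al0) u ->
               real_span (rchain br B emb al0) v -> c * hform B emb u v \is Num.real)
    (hpos : forall al, rchain br B emb al0 al -> 0 < c * hform B emb al al)
    (hfin : exists n (s : 'I_n -> H -> R[i]),
              forall al, rchain br B emb al0 al ->
                exists k, Vrad br B emb (fun h => al h - s k h)) :
  (forall v, real_span (rchain br B emb al0) v -> ~ Vrad br B emb v ->
     0 < c * hform B emb v v) /\
  (forall v, real_span (rchain br B emb al0) v -> 0 <= c * hform B emb v v).
Proof.
have [n [s hs]] := hfin.
have [k0 _] := hs al0 (rchain_refl hal0).
split.
- by move=> v Vv nV; exact: (final_i hG hal0 hc hreal hpos k0 hs Vv nV).
- by move=> v Vv; exact: (final_ii hG hal0 hc hreal hpos k0 hs Vv).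
Qed.
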